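(* Assume the setting and the CRAIG recurrence described in the context, and let $\ell$ be the index at which the recurrence stops, i.e. $\beta_2,\dots,\beta_\ell>0$ and $\beta_{\ell+1}=0$ (with $\ell\le n$). Then for every $1\le k\le \ell$, $$\|u_*-u^{(k)}\|_M^2+(p_*-p^{(k)})^TC(p_*-p^{(k)})=\|p_*-p^{(k)}\|_S^2=\sum_{i=k+1}^{\ell}\zeta_i^2,$$ where $\|x\|_S=(x^TSx)^{1/2}$. In particular $\|u_*-u^{(k)}\|_M^2\le\sum_{i=k+1}^{\ell}\zeta_i^2$, and the sequence $\|p_*-p^{(k)}\|_S$, $k=1,\dots,\ell$, is strictly decreasing.
   Context: Setting: $M\in\mathbb{R}^{m\times m}$ is symmetric positive definite, $A\in\mathbb{R}^{m\times n}$ ($n\le m$) has full column rank, $C\in\mathbb{R}^{n\times n}$ is symmetric positive semidefinite, $b\in\mathbb{R}^n$ is nonzero, and $N\in\mathbb{R}^{n\times n}$ is symmetric positive definite (the preconditioner). For a symmetric positive definite $G$ write $\|x\|_G=(x^TGx)^{1/2}$. The generalized saddle point system is $Mu+Ap=0$, $A^Tu-Cp=b$, with unique solution $(u_*,p_* )$; $S=A^TM^{-1}A+C$. CRAIG recurrence (exact arithmetic): Initialization: $\beta_1=\|b\|_{N^{-1}}$, $q_1=N^{-1}b/\beta_1$, $r_1=q_1$, $w_1=M^{-1}Aq_1$, $s_1=Cr_1$, $\alpha_1=(w_1^TMw_1+r_1^Ts_1)^{1/2}$, $v_1=w_1/\alpha_1$, $t_1=s_1/\alpha_1$, $\zeta_1=\beta_1/\alpha_1$,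 $u^{(1)}=\zeta_1v_1$, $p^{(1)}=-(\zeta_1/\alpha_1)r_1$. For $k=1,2,\dots$: $g_k=N^{-1}(A^Tv_k+t_k)-\alpha_kq_k$, $\beta_{k+1}=\|g_k\|_N$; if $\beta_{k+1}=0$ the recurrence stops; otherwise $q_{k+1}=g_k/\beta_{k+1}$, $w_{k+1}=M^{-1}Aq_{k+1}-\beta_{k+1}v_k$, $r_{k+1}=q_{k+1}-(\beta_{k+1}/\alpha_k)r_k$, $s_{k+1}=Cr_{k+1}$, $\alpha_{k+1}=(w_{k+1}^TMw_{k+1}+r_{k+1}^Ts_{k+1})^{1/2}$, $v_{k+1}=w_{k+1}/\alpha_{k+1}$, $t_{k+1}=s_{k+1}/\alpha_{k+1}$, $\zeta_{k+1}=-(\beta_{k+1}/\alpha_{k+1})\zeta_k$, $u^{(k+1)}=u^{(k)}+\zeta_{k+1}v_{k+1}$, $p^{(k+1)}=p^{(k)}-(\zeta_{k+1}/\alpha_{k+1})r_{k+1}$. *)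

(* Defs.v *)
From HB Require Import structures.
From mathcomp Require Import all_boot all_order all_algebra.
Set Implicit Arguments. Unset Strict Implicit. Unset Printing Implicit Defensive.
Import Order.TTheory GRing.Theory Num.Theory.
Local Open Scope ring_scope.

Section Craig.
Variables (R : rcfType) (m n : nat).

Definition qf k (G : 'M[R]_k) (x : 'cV[R]_k) : R := (x^T *m G *m x) 0 0.
Definition Gnorm k (G : 'M[R]_k) (x : 'cV[R]_k) : R := Num.sqrt (qf G x).

Definition sym_pd k (G : 'M[R]_k) : Prop :=
  G^T = G /\ forall x : 'cV[R]_k, x != 0 -> 0 < qf G x.
Definition sym_psd k (G : 'M[R]_k) : Prop :=
  G^T = G /\ forall x : 'cV[R]_k, 0 <= qf G x.

Record craig_state := CraigState {
  cq : 'cV[R]_n; cr : 'cV[R]_n; cv : 'cV[R]_m; ct : 'cV[R]_n;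
  calpha : R; cbeta : R; czeta : R; cu : 'cV[R]_m; cp : 'cV[R]_n }.

Variables (M : 'M[R]_m) (A : 'M[R]_(m, n)) (C N : 'M[R]_n) (b : 'cV[R]_n).

Definition craig_init : craig_state :=
  let beta1 := Gnorm (invmx N) b in
  let q1 := beta1^-1 *: (invmx N *m b) in
  let r1 := q1 in
  let w1 := invmx M *m A *m q1 in
  let s1 := C *m r1 in
  let alpha1 := Num.sqrt (qf M w1 + (r1^T *m s1) 0 0) in
  let v1 := alpha1^-1 *: w1 in
  let t1 := alpha1^-1 *: s1 in
  let zeta1 := beta1 / alpha1 in
  CraigState q1 r1 v1 t1 alpha1 beta1 zeta1 (zeta1 *: v1) (- ((zeta1 / alpha1) *: r1)).

(* one step k -> k+1 (only meaningful when beta_{k+1} > 0) *)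
Definition craig_step (st : craig_state) : craig_state :=
  let g := invmx N *m (A^T *m cv st + ct st) - calpha st *: cq st in
  let beta' := Gnorm N g in
  let q' := beta'^-1 *: g in
  let w' := invmx M *m A *m q' - beta' *: cv st in
  let r' := q' - (beta' / calpha st) *: cr st in
  let s' := C *m r' in
  let alpha' := Num.sqrt (qf M w' + (r'^T *m s') 0 0) in
  let v' := alpha'^-1 *: w' in
  let t' := alpha'^-1 *: s' in
  let zeta' := - (beta' / alpha') * czeta st in
  CraigState q' r' v' t' alpha' beta' zeta'
    (cu st + zeta' *: v') (cp st - (zeta' / alpha') *: r').

(* craig_iter j is the state at index j+1 *)
Fixpoint craig_iter (j : nat) : craig_state :=
  if j is j'.+1 then craig_step (craig_iter j') else craig_init.

(* 1-based accessors: for i >= 1 *)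
Definition beta_ i := cbeta (craig_iter i.-1).
Definition zeta_ i := czeta (craig_iter i.-1).
Definition u_ k := cu (craig_iter k.-1).
Definition p_ k := cp (craig_iter k.-1).

End Craig.

(* Main.v *)
Require Import Defs.
From HB Require Import structures.
From mathcomp Require Import all_boot all_order all_algebra.
From mathcomp Require Import ring lra.
Import Order.TTheory GRing.Theory Num.Theory.
Local Open Scope ring_scope.
Set Implicit Arguments. Unset Strict Implicit. Unset Printing Implicit Defensive.

Section Gen.
Variable R : rcfType.

Definition bil k (G : 'M[R]_k) (x y : 'cV[R]_k) : R := (x^T *m G *m y) 0 0.

Lemma qfE k (G : 'M[R]_k) x : qf G x = bil G x x. Proof. by []. Qed.

Lemma bilDr k (G : 'M[R]_k) x y z : bil G x (y + z) = bil G x y + bil G x z.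
Proof. by rewrite /bil mulmxDr mxE. Qed.
Lemma bilZr k (G : 'M[R]_k) x a y : bil G x (a *: y) = a * bil G x y.
Proof. by rewrite /bil -scalemxAr mxE. Qed.
Lemma bilNr k (G : 'M[R]_k) x y : bil G x (- y) = - bil G x y.
Proof. by rewrite -scaleN1r bilZr mulN1r. Qed.
Lemma bilBr k (G : 'M[R]_k) x y z : bil G x (y - z) = bil G x y - bil G x z.
Proof. by rewrite bilDr bilNr. Qed.
Lemma bilDl k (G : 'M[R]_k) x y z : bil G (x + y) z = bil G x z + bil G y z.
Proof. by rewrite /bil linearD /= !mulmxDl mxE. Qed.
Lemma bilZl k (G : 'M[R]_k) x a y : bil G (a *: x) y = a * bil G x y.
Proof. by rewrite /bil linearZ /= -!scalemxAl mxE. Qed.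
Lemma bilNl k (G : 'M[R]_k) x y : bil G (- x) y = - bil G x y.
Proof. by rewrite -scaleN1r bilZl mulN1r. Qed.
Lemma bilBl k (G : 'M[R]_k) x y z : bil G (x - y) z = bil G x z - bil G y z.
Proof. by rewrite bilDl bilNl. Qed.
Lemma bil0r k (G : 'M[R]_k) x : bil G x 0 = 0.
Proof. by rewrite /bil mulmx0 mxE. Qed.
Lemma bilDG k (G H : 'M[R]_k) x y : bil (G + H) x y = bil G x y + bil H x y.
Proof. by rewrite /bil mulmxDr mulmxDl mxE. Qed.
Lemma bil_sym k (G : 'M[R]_k) x y : G^T = G -> bil G x y = bil G y x.
Proof.
move=> HG; rewrite /bil.
have -> : y^T *m G *m x = (x^T *m G *m y)^T by rewrite !trmx_mul trmxK HG mulmxA.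
by rewrite [RHS]mxE.
Qed.
Lemma bil_mulr k (G H : 'M[R]_k) x y : bil G x (H *m y) = bil (G *m H) x y.
Proof. by rewrite /bil !mulmxA. Qed.
Lemma bil_mull k (G H : 'M[R]_k) x y : bil G (H *m x) y = bil (H^T *m G) x y.
Proof. by rewrite /bil trmx_mul !mulmxA. Qed.

End Gen.


Section Gen2.
Variable R : rcfType.

Lemma qf0 k (G : 'M[R]_k) : qf G 0 = 0.
Proof. by rewrite qfE bil0r. Qed.

Lemma pd_ge0 k (G : 'M[R]_k) x : sym_pd G -> 0 <= qf G x.
Proof.
move=> [_ H]; have [->|/H/ltW //] := eqVneq x 0; by rewrite qf0.
Qed.

Lemma pd_eq0 k (G : 'M[R]_k) x : sym_pd G -> qf G x <= 0 -> x = 0.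
Proof.
move=> [_ H] Hq; apply/eqP; apply/negP => /negP /H; by rewrite ltNge Hq.
Qed.

Lemma pd_unit k (G : 'M[R]_k) : sym_pd G -> G \in unitmx.
Proof.
move=> HG; rewrite -row_free_unit -kermx_eq0; apply/negPn/negP => HK.
have /existsP [i Hi] : [exists i, row i (kermx G) != 0].
  rewrite -negb_forall; apply: contra HK => /forallP Hall; apply/eqP/row_matrixP => i.
  by move: (Hall i); rewrite row0 => /eqP.
set u := row i (kermx G).
have Hu : u *m G = 0 by rewrite /u -row_mul mulmx_ker row0.
have Hx : u^T != 0 by apply: contra Hi => /eqP H; rewrite -/u -(trmxK u) H linear0.
have := pd_eq0 (x := u^T) HG.
rewrite /qf trmxK Hu mul0mx mxE lexx => /(_ isT) /eqP; by rewrite (negbTE Hx).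
Qed.

Lemma pd_inv k (G : 'M[R]_k) : sym_pd G -> sym_pd (invmx G).
Proof.
move=> HG; have HU := pd_unit HG; case: (HG) => Hs Hp; split.
  by rewrite trmx_inv Hs.
move=> x Hx; have -> : qf (invmx G) x = qf G (invmx G *m x).
  rewrite !qfE bil_mull bil_mulr trmx_inv Hs -mulmxA mulmxV // mulmx1 //.
apply: Hp; apply: contra Hx => /eqP H.
by rewrite -(mulKVmx HU x) H mulmx0.
Qed.

Lemma Gnorm_sq k (G : 'M[R]_k) x : 0 <= qf G x -> Gnorm G x ^+ 2 = qf G x.
Proof. by move=> H; rewrite /Gnorm sqr_sqrtr. Qed.

End Gen2.


Section Main.
Variables (R : rcfType) (m n : nat).
Variables (M : 'M[R]_m) (A : 'M[R]_(m, n)) (C N : 'M[R]_n) (b : 'cV[R]_n).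
Hypothesis HM : sym_pd M.
Hypothesis HA : \rank A = n.
Hypothesis HC : sym_psd C.
Hypothesis Hb : b != 0.
Hypothesis HN : sym_pd N.

Let st K := craig_iter M A C N b K.
Let q K := cq (st K).
Let r K := cr (st K).
Let v K := cv (st K).
Let t K := ct (st K).
Let al K := calpha (st K).
Let be K := cbeta (st K).
Let ze K := czeta (st K).
Let u K := cu (st K).
Let p K := cp (st K).
Let Mi := invmx M.
Let Ni := invmx N.
Let S := A^T *m Mi *m A + C.

Lemma MU : M \in unitmx. Proof. exact: pd_unit HM. Qed.
Lemma NU : N \in unitmx. Proof. exact: pd_unit HN. Qed.
Lemma MiS : Mi^T = Mi. Proof. by rewrite /Mi trmx_inv HM.1. Qed.
Lemma NiS : Ni^T = Ni. Proof. by rewrite /Ni trmx_inv HN.1. Qed.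

Lemma Ax_neq0 (x : 'cV[R]_n) : x != 0 -> A *m x != 0.
Proof.
move=> Hx; apply: contra Hx => /eqP H.
have Hf : row_free A^T by rewrite /row_free mxrank_tr HA.
have : x^T *m A^T == 0 by rewrite -trmx_mul H linear0.
rewrite mulmx_free_eq0 // => /eqP Ht; by rewrite -(trmxK x) Ht linear0.
Qed.

Lemma qfS (x : 'cV[R]_n) : qf S x = qf M (Mi *m A *m x) + qf C x.
Proof.
rewrite !qfE /S bilDG; congr (_ + _).
rewrite /bil !trmx_mul MiS !mulmxA -(mulmxA (x^T *m A^T *m Mi) M Mi) mulmxV ?MU //.
by rewrite mulmx1.
Qed.

Lemma SS : S^T = S.
Proof. by rewrite /S linearD /= !trmx_mul trmxK MiS HC.1 mulmxA. Qed.

Lemma S_pd : sym_pd S.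
Proof.
split; first exact: SS.
move=> x Hx; rewrite qfS.
apply: ltr_pwDl; last by case: HC.
case: HM => _ Hp; apply: Hp; rewrite -mulmxA.
apply: contra (Ax_neq0 Hx) => /eqP H.
by rewrite -(mulKVmx MU (A *m x)) -/Mi H mulmx0.
Qed.


Let g K := Ni *m (A^T *m v K + t K) - al K *: q K.
Lemma beS K : be K.+1 = Gnorm N (g K). Proof. by []. Qed.
Lemma qS K : q K.+1 = (be K.+1)^-1 *: g K. Proof. by []. Qed.
Lemma rS K : r K.+1 = q K.+1 - (be K.+1 / al K) *: r K. Proof. by []. Qed.
Lemma vS K : v K.+1 = (al K.+1)^-1 *: (Mi *m A *m q K.+1 - be K.+1 *: v K). Proof. by []. Qed.
Lemma tS K : t K.+1 = (al K.+1)^-1 *: (C *m r K.+1). Proof. by []. Qed.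
Lemma alS K : al K.+1 = Num.sqrt (qf M (Mi *m A *m q K.+1 - be K.+1 *: v K)
   + ((r K.+1)^T *m (C *m r K.+1)) 0 0). Proof. by []. Qed.
Lemma zeS K : ze K.+1 = - (be K.+1 / al K.+1) * ze K. Proof. by []. Qed.
Lemma uS K : u K.+1 = u K + ze K.+1 *: v K.+1. Proof. by []. Qed.
Lemma pS K : p K.+1 = p K - (ze K.+1 / al K.+1) *: r K.+1. Proof. by []. Qed.
Lemma be0 : be 0 = Gnorm Ni b. Proof. by []. Qed.
Lemma q0 : q 0 = (be 0)^-1 *: (Ni *m b). Proof. by []. Qed.
Lemma r0 : r 0 = q 0. Proof. by []. Qed.
Lemma v0 : v 0 = (al 0)^-1 *: (Mi *m A *m q 0). Proof. by []. Qed.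
Lemma t0 : t 0 = (al 0)^-1 *: (C *m r 0). Proof. by []. Qed.
Lemma al0 : al 0 = Num.sqrt (qf M (Mi *m A *m q 0) + ((r 0)^T *m (C *m r 0)) 0 0). Proof. by []. Qed.
Lemma ze0 : ze 0 = be 0 / al 0. Proof. by []. Qed.
Lemma u0 : u 0 = ze 0 *: v 0. Proof. by []. Qed.
Lemma p0 : p 0 = - ((ze 0 / al 0) *: r 0). Proof. by []. Qed.

Lemma t_form K : t K = (al K)^-1 *: (C *m r K).
Proof. by case: K. Qed.

Lemma w_form K : v K = (al K)^-1 *: (Mi *m A *m r K).
Proof.
elim: K => [|K IH]; first by rewrite v0 r0.
rewrite vS IH rS; congr (_ *: _).
by rewrite mulmxBr -!scalemxAr scalerA.
Qed.


Lemma u_form K : u K = - (Mi *m A *m p K).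
Proof.
elim: K => [|K IH].
  by rewrite u0 p0 v0 r0 mulmxN opprK -!scalemxAr !scalerA.
rewrite uS pS IH w_form; move: (p K) (r K.+1) (ze K.+1) (al K.+1) => P0 R0 Z0 A0.
by rewrite mulmxBr !scalemxAr scalerA opprB addrC.
Qed.

Lemma Miq K : Mi *m A *m q K.+1 - be K.+1 *: v K = Mi *m A *m r K.+1.
Proof. by rewrite w_form rS mulmxBr -!scalemxAr scalerA. Qed.

Lemma qfC (x : 'cV[R]_n) : (x^T *m (C *m x)) 0 0 = qf C x.
Proof. by rewrite /qf mulmxA. Qed.

Lemma al_eq K : al K = Num.sqrt (qf S (r K)).
Proof.
case: K => [|K]; first by rewrite al0 qfC qfS r0.
by rewrite alS Miq qfC qfS.
Qed.

Lemma al_sq K : al K ^+ 2 = qf S (r K).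
Proof. rewrite al_eq sqr_sqrtr //; exact: pd_ge0 S_pd. Qed.

Lemma al_ge0 K : 0 <= al K.
Proof. by rewrite al_eq sqrtr_ge0. Qed.

Lemma be_ge0 K : 0 <= be K.
Proof. by case: K => [|K]; rewrite /be /= /Gnorm sqrtr_ge0. Qed.

Lemma g_form K : g K = (al K)^-1 *: (Ni *m S *m r K) - al K *: q K.
Proof.
rewrite /g; congr (_ - _); rewrite w_form t_form -!scalemxAr -scalerDr -scalemxAr.
have -> : A^T *m (Mi *m A *m r K) + C *m r K = S *m r K by rewrite /S mulmxDl !mulmxA.
by rewrite mulmxA.
Qed.

Lemma beq K : be K.+1 *: q K.+1 = g K.
Proof.
rewrite qS scalerA; have [H0|Hn] := eqVneq (be K.+1) 0.
  rewrite H0 mul0r scale0r; symmetry; apply: (pd_eq0 HN).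
  by move: H0; rewrite beS /Gnorm => /eqP; rewrite sqrtr_eq0.
by rewrite mulfV // scale1r.
Qed.

Lemma qN1 K : be K.+1 != 0 -> qf N (q K.+1) = 1.
Proof.
move=> Hn; rewrite qS !qfE bilZl bilZr -qfE -(Gnorm_sq (x := g K)) ?pd_ge0 //.
by rewrite -beS mulrA -expr2 -exprMn mulVf // expr1n.
Qed.

Lemma Ni_pd : sym_pd Ni. Proof. exact: pd_inv. Qed.

Lemma be0_gt0 : 0 < be 0.
Proof.
rewrite be0 /Gnorm sqrtr_gt0; by case: Ni_pd => _; apply.
Qed.

Lemma qN0 : qf N (q 0) = 1.
Proof.
have Hn : be 0 != 0 by rewrite gt_eqF // be0_gt0.
rewrite q0 !qfE bilZl bilZr bil_mull bil_mulr NiS -mulmxA mulmxV ?NU // mulmx1.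
have HB : qf Ni b = be 0 ^+ 2 by rewrite be0 Gnorm_sq //; exact: pd_ge0 Ni_pd.
rewrite -qfE HB.
by rewrite mulrA -expr2 -exprMn mulVf // expr1n.
Qed.


Lemma NiSr K : al K != 0 ->
  Ni *m S *m r K = al K ^+ 2 *: q K + (al K * be K.+1) *: q K.+1.
Proof.
move=> Ha; rewrite -scalerA beq g_form scalerBr scalerA mulfV // scale1r.
by rewrite scalerA -expr2 addrC subrK.
Qed.

Lemma bilN_NiS (x y : 'cV[R]_n) : bil N x (Ni *m S *m y) = bil S x y.
Proof. by rewrite bil_mulr mulmxA mulmxV ?NU // mul1mx. Qed.

Lemma bilS_sym (x y : 'cV[R]_n) : bil S x y = bil S y x.
Proof. exact: bil_sym SS. Qed.
Lemma bilN_sym (x y : 'cV[R]_n) : bil N x y = bil N y x.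
Proof. exact: bil_sym HN.1. Qed.

Definition Inv K := forall i j, (i <= K)%N -> (j <= K)%N ->
  [/\ bil N (q i) (q j) = (i == j)%:R, (i != j -> bil S (r i) (r j) = 0),
      ((j < i)%N -> bil N (q i) (r j) = 0) & 0 < al i].

Lemma rSr K i j : Inv K -> (i <= K)%N -> (j <= K)%N ->
  bil S (r i) (r j) = (i == j)%:R * al i ^+ 2.
Proof.
move=> HI Hi Hj; have [<-|Hn] := eqVneq i j.
  by rewrite mul1r al_sq qfE.
by case: (HI i j Hi Hj) => _ -> //; rewrite mul0r.
Qed.

Lemma rSq K j : Inv K -> (j <= K)%N -> bil S (r K) (q j) = (j == K)%:R * al K ^+ 2.
Proof.
move=> HI; case: j => [|j] Hj.
  by rewrite -r0 (rSr HI) // eq_sym.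
have -> : q j.+1 = r j.+1 + (be j.+1 / al j) *: r j by rewrite rS subrK.
rewrite bilDr bilZr (rSr HI) // (rSr HI (i := K) (j := j)) ?(ltnW Hj) //.
rewrite (_ : (K == j) = false) ?mul0r ?mulr0 ?addr0 1?eq_sym //.
by rewrite ltn_eqF.
Qed.

Lemma Inv_step K : Inv K -> 0 < be K.+1 -> Inv K.+1.
Proof.
move=> HI Hbe.
have HaK : 0 < al K by case: (HI K K (leqnn K) (leqnn K)).
have Ha0 : al K != 0 by rewrite gt_eqF.
have Hb0 : be K.+1 != 0 by rewrite gt_eqF.
have Ha : forall j, (j <= K)%N -> bil N (q K.+1) (q j) = 0.
  move=> j Hj; apply: (mulfI Hb0); rewrite mulr0 -bilZl beq g_form bilBl !bilZl.
  rewrite bilN_sym bilN_NiS bilS_sym (rSq HI) //.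
  case: (HI K j (leqnn K) Hj) => -> _ _ _.
  rewrite [j == K]eq_sym; case: (K == j) => /=; rewrite ?mulr0n ?mulr1n; last by rewrite !mul0r !mulr0 subr0.
  by rewrite mul1r mulr1 expr2 mulrA mulVf // mul1r subrr.

have Ha' : bil N (q K.+1) (q K.+1) = 1 by rewrite -qfE qN1.
have Hc : forall j, (j <= K)%N -> bil N (q K.+1) (r j) = 0.
  elim=> [|j IH] Hj; first by rewrite r0 Ha.
  by rewrite rS bilBr bilZr IH ?(ltnW Hj) // Ha // mulr0 subr0.
have Hbb : forall j, (j <= K)%N -> bil S (r K.+1) (r j) = 0.
  move=> j Hj; have Haj : al j != 0.
    by case: (HI j j Hj Hj) => _ _ _ /gt_eqF ->.
  rewrite rS bilBl bilZl -bilN_NiS NiSr // bilDr 2!bilZr Ha // mulr0 add0r.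
  rewrite (rSr HI) //; move: Hj; rewrite leq_eqVlt => /orP [/eqP ->|Hj].
    by rewrite Ha' eqxx mulr1 mul1r expr2 mulrA divfK // mulrC subrr.
  rewrite Ha // (_ : (K == j) = false); last by rewrite gtn_eqF.
  by rewrite /= mul0r !mulr0 subr0.
have Hd : 0 < al K.+1.
  have Hr : r K.+1 != 0.
    apply/eqP => H0; have : bil N (q K.+1) (r K.+1) = 1.
      by rewrite rS bilBr bilZr Hc // mulr0 subr0.
    by rewrite H0 bil0r => /eqP; rewrite eq_sym oner_eq0.
  have : 0 < al K.+1 ^+ 2 by rewrite al_sq; case: S_pd => _; apply.
  move=> H2; rewrite lt_neqAle al_ge0 andbT; apply: contraTneq H2 => <-.
  by rewrite expr0n /= ltxx.
move=> i j; rewrite leq_eqVlt ltnS => /orP [/eqP ->|Hi];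
  rewrite leq_eqVlt ltnS => /orP [/eqP ->|Hj].
- by split => //; rewrite ?eqxx ?ltnn.
- split => //.
  + by rewrite Ha // (_ : (K.+1 == j) = false) // gtn_eqF // ltnS.
  + by move=> _; apply: Hbb.
  + by move=> _; apply: Hc.
- split.
  + by rewrite bilN_sym Ha // (_ : (i == K.+1) = false) // ltn_eqF // ltnS.
  + by move=> _; rewrite bilS_sym Hbb.
  + by rewrite ltnNge (leqW Hi).
  + by case: (HI i i Hi Hi).
- exact: HI.
Qed.


Lemma Inv0 : Inv 0.
Proof.
move=> i j; rewrite !leqn0 => /eqP -> /eqP ->; split => //.
  by rewrite -qfE qN0.
have Hr : r 0 != 0.
  apply/eqP => H0; move: qN0; rewrite -r0 H0 qf0 => /eqP; by rewrite eq_sym oner_eq0.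
have : 0 < al 0 ^+ 2 by rewrite al_sq; case: S_pd => _; apply.
move=> H2; rewrite lt_neqAle al_ge0 andbT; apply: contraTneq H2 => <-.
by rewrite expr0n /= ltxx.
Qed.

Variable l : nat.
Hypothesis Hl : (1 <= l)%N.
Hypothesis Hpos : forall K, (0 < K < l)%N -> 0 < be K.
Hypothesis Hend : be l = 0.

Lemma Inv_all K : (K < l)%N -> Inv K.
Proof.
elim: K => [|K IH] HK; first exact: Inv0.
apply: Inv_step; first by apply: IH; apply: ltnW.
by apply: Hpos.
Qed.

Lemma al_pos K : (K < l)%N -> 0 < al K.
Proof. by move=> HK; case: (Inv_all HK (leqnn K) (leqnn K)). Qed.


Lemma term K : (K < l)%N ->
  Ni *m S *m p K = - (be 0 *: q 0) - (ze K * be K.+1) *: q K.+1.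
Proof.
elim: K => [|K IH] HK.
  have Ha := al_pos HK; have Ha0 : al 0 != 0 by rewrite gt_eqF.
  rewrite p0 mulmxN -scalemxAr NiSr // ze0.
  move: (q 0) (q 1) (be 0) (be 1) (al 0) Ha0 => Q0 Q1 B0 B1 A0 HX0.
  rewrite scalerDr !scalerA opprD; congr (- (_ *: _) - (_ *: _)); field; exact: HX0.
have Ha := al_pos HK; have Ha0 : al K.+1 != 0 by rewrite gt_eqF.
rewrite pS mulmxBr -scalemxAr IH ?(ltnW HK) // NiSr // zeS.
move: (q 0) (q K.+1) (q K.+2) (be 0) (be K.+1) (be K.+2) (al K.+1) (ze K) Ha0
  => Q0 Q1 Q2 B0 B1 B2 A1 Z HX.
rewrite scalerDr !scalerA.
have -> : - (B1 / A1) * Z / A1 * A1 ^+ 2 = - (Z * B1) by field.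
have -> : - (B1 / A1) * Z / A1 * (A1 * B2) = - (B1 / A1) * Z * B2 by field.
by rewrite scaleNr opprD opprK addrA subrK.
Qed.


Lemma SU : S \in unitmx. Proof. exact: pd_unit S_pd. Qed.

Lemma Spl : S *m p l.-1 = - b.
Proof.
have Hl' : (l.-1 < l)%N by rewrite prednK.
have := term Hl'; rewrite prednK // Hend mulr0 scale0r subr0 q0 scalerA.
rewrite mulfV ?gt_eqF ?be0_gt0 // scale1r => H.
have := congr1 (mulmx N) H; rewrite !mulmxA mulmxV ?NU // !mul1mx.
by rewrite mulmxN mulmxA mulmxV ?NU // mul1mx.
Qed.

Variables (ustar : 'cV[R]_m) (pstar : 'cV[R]_n).
Hypothesis H1 : M *m ustar + A *m pstar = 0.
Hypothesis H2 : A^T *m ustar - C *m pstar = b.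

Lemma ustar_eq : ustar = - (Mi *m A *m pstar).
Proof.
have : M *m ustar = - (A *m pstar) by apply/eqP; rewrite -addr_eq0 H1.
move=> /(congr1 (mulmx Mi)); rewrite mulmxA mulVmx ?MU // mul1mx => ->.
by rewrite mulmxN mulmxA.
Qed.

Lemma pstar_eq : pstar = p l.-1.
Proof.
have HS : S *m pstar = - b.
  rewrite -H2 ustar_eq /S mulmxDl mulmxN !mulmxA opprB.
  by rewrite opprK addrC.
have : S *m pstar = S *m p l.-1 by rewrite HS Spl.
by move=> /(congr1 (mulmx (invmx S))); rewrite !mulKmx ?SU.
Qed.

Lemma rSp j K : (j < l)%N -> (K < l)%N ->
  bil S (r j) (p K) = if (j <= K)%N then - (ze j * al j) else 0.
Proof.
move=> Hj; have Hl1 : (l.-1 < l)%N by rewrite ltn_predL.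
have HI := Inv_all Hl1.
have Hj' : (j <= l.-1)%N by rewrite -ltnS prednK.
elim: K => [|K IH] HK.
  have Ha0 : al 0 != 0 by rewrite gt_eqF // al_pos.
  rewrite p0 bilNr bilZr (rSr HI) // leqn0.
  case: (j =P 0%N) => [->|_] /=; last by rewrite mul0r mulr0 oppr0.
  rewrite mul1r ze0; move: (be 0) (al 0) Ha0 => B0 A0 HX; field; exact: HX.
have HK' : (K.+1 <= l.-1)%N by rewrite -ltnS prednK.
have Ha0 : al K.+1 != 0 by rewrite gt_eqF // al_pos.
rewrite pS bilBr bilZr IH ?(ltnW HK) // (rSr HI) //.
case: (ltngtP j K.+1) => [Hlt|Hgt|->].
- by rewrite -ltnS Hlt /= mul0r mulr0 subr0.
- rewrite ifF /= ?mul0r ?mulr0 ?subr0 //; by rewrite leqNgt (ltnW Hgt).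
- rewrite ltnn /= mulr1n mul1r sub0r.
  move: (be K.+1) (al K.+1) (ze K) Ha0 => B A1 Z HX; field; exact: HX.
Qed.


Lemma sumlem d : (d < l)%N ->
  qf S (p l.-1 - p (l.-1 - d)) = \sum_((l.-1 - d).+2 <= i < l.+1) ze i.-1 ^+ 2.
Proof.
elim: d => [|d IH] Hd.
  by rewrite subn0 subrr qf0 big_geq // prednK.
set K := (l.-1 - d.+1)%N.
have HK : K.+1 = (l.-1 - d)%N.
  by rewrite /K subnS prednK // subn_gt0 -ltnS prednK.
have HKl : (K.+1 < l)%N by rewrite HK (leq_ltn_trans (leq_subr _ _)) // ltn_predL.
have Hl1 : (l.-1 < l)%N by rewrite ltn_predL.
rewrite big_ltn; last exact: HKl.
rewrite -HK in IH; rewrite -IH ?(ltnW Hd) //= -/K.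
have -> : p l.-1 - p K = (p l.-1 - p K.+1) - (ze K.+1 / al K.+1) *: r K.+1.
  rewrite pS; move: (p l.-1) (p K) (_ *: r K.+1) => P1 P0 X.
  by rewrite opprB [X - P0]addrC addrA addrK.
have Ha0 : al K.+1 != 0 by rewrite gt_eqF // al_pos.
have Hbil : bil S (r K.+1) (p l.-1 - p K.+1) = 0.
  rewrite bilBr !rSp // -ltnS prednK // HKl leqnn; by rewrite subrr.
have Hr2 : bil S (r K.+1) (r K.+1) = al K.+1 ^+ 2 by rewrite al_sq.
have Hsym : forall x y, bil S x y = bil S y x by move=> x y; apply: bilS_sym.
move: Hbil Hr2; move: (p l.-1 - p K.+1) (r K.+1) (ze K.+1) (al K.+1) Ha0 => X Rr Z A1 HX Hb1 Hr2.
rewrite !qfE bilBl !bilBr !bilZl !bilZr Hr2 (Hsym X Rr) Hb1 !mulr0 !subr0 sub0r opprK.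
field; exact: HX.
Qed.


Lemma ze_neq0 K : (K < l)%N -> ze K != 0.
Proof.
elim: K => [|K IH] HK.
  by rewrite ze0 mulf_neq0 ?invr_eq0 ?gt_eqF ?be0_gt0 ?al_pos.
rewrite zeS mulf_neq0 ?IH ?(ltnW HK) // oppr_eq0 mulf_neq0 ?invr_eq0 ?gt_eqF ?al_pos //.
by apply: Hpos; rewrite HK.
Qed.

Lemma part1 k : (1 <= k <= l)%N ->
  Gnorm M (ustar - u k.-1) ^+ 2 + qf C (pstar - p k.-1) = Gnorm S (pstar - p k.-1) ^+ 2 /\
  Gnorm S (pstar - p k.-1) ^+ 2 = \sum_(k.+1 <= i < l.+1) ze i.-1 ^+ 2.
Proof.
move=> /andP [Hk1 Hkl].
have HK : (k.-1 < l)%N by rewrite prednK.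
have HS : Gnorm S (pstar - p k.-1) ^+ 2 = qf S (pstar - p k.-1).
  by rewrite Gnorm_sq //; apply: pd_ge0 S_pd.
split.
  rewrite HS Gnorm_sq; last by apply: pd_ge0 HM.
  rewrite qfS ustar_eq u_form opprK.
  have -> : - (Mi *m A *m pstar) + Mi *m A *m p k.-1 = - (Mi *m A *m (pstar - p k.-1)).
    by rewrite mulmxBr opprB addrC.
  by rewrite !qfE bilNl bilNr opprK.

rewrite HS pstar_eq.
have Hd : (l.-1 - k.-1 < l)%N by rewrite (leq_ltn_trans (leq_subr _ _)) // ltn_predL.
have := sumlem Hd; rewrite subKn; last by rewrite -!subn1 leq_sub2r.
by rewrite prednK.
Qed.

End Main.

Unset Implicit Arguments.

Theorem mainTheorem5 (R : rcfType) (m n : nat)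
  (M : 'M[R]_m) (A : 'M[R]_(m, n)) (C N : 'M[R]_n) (b : 'cV[R]_n)
  (ustar : 'cV[R]_m) (pstar : 'cV[R]_n) (l : nat) :
  (n <= m)%N ->
  sym_pd M -> \rank A = n -> sym_psd C -> b != 0 -> sym_pd N ->
  M *m ustar + A *m pstar = 0 ->
  A^T *m ustar - C *m pstar = b ->
  (1 <= l)%N ->
  (forall i, (2 <= i <= l)%N -> 0 < beta_ M A C N b i) ->
  beta_ M A C N b l.+1 = 0 ->
  let S := A^T *m invmx M *m A + C in
  let eu k := ustar - u_ M A C N b k in
  let ep k := pstar - p_ M A C N b k in
  (forall k, (1 <= k <= l)%N ->
     Gnorm M (eu k) ^+ 2 + qf C (ep k) = Gnorm S (ep k) ^+ 2 /\
     Gnorm S (ep k) ^+ 2 = \sum_(k.+1 <= i < l.+1) zeta_ M A C N b i ^+ 2) /\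
  (forall k, (1 <= k <= l)%N ->
     Gnorm M (eu k) ^+ 2 <= \sum_(k.+1 <= i < l.+1) zeta_ M A C N b i ^+ 2) /\
  (forall k, (1 <= k < l)%N -> Gnorm S (ep k.+1) < Gnorm S (ep k)).
Proof.
move=> _ HM HA HC Hb HN H1 H2 Hl Hpos Hend S eu ep.
have Hpos' : forall K, (0 < K < l)%N -> 0 < cbeta (craig_iter M A C N b K).
  move=> K /andP [HK0 HKl]; apply: (Hpos K.+1); by rewrite ltnS HK0 HKl.
have P1 := @part1 R m n M A C N b HM HA HC Hb HN l Hl Hpos' Hend ustar pstar H1 H2.
have HSpd : sym_pd S by apply: S_pd.
have P1' : forall k, (1 <= k <= l)%N ->
     Gnorm M (eu k) ^+ 2 + qf C (ep k) = Gnorm S (ep k) ^+ 2 /\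
     Gnorm S (ep k) ^+ 2 = \sum_(k.+1 <= i < l.+1) zeta_ M A C N b i ^+ 2.
  by move=> k Hk; apply: P1.
split; first exact: P1'.
split.
  move=> k Hk; have [E1 E2] := P1' k Hk; rewrite -E2 -E1 lerDl.
  by case: HC => _; apply.

move=> k /andP [Hk1 Hkl].
have Hk : (1 <= k <= l)%N by rewrite Hk1 ltnW.
have Hk' : (1 <= k.+1 <= l)%N by rewrite Hkl.
have E1 := (P1' k Hk).2; have E2 := (P1' k.+1 Hk').2.
have G x : Gnorm S x = Num.sqrt (Gnorm S x ^+ 2).
  by rewrite sqrtr_sqr ger0_norm // /Gnorm sqrtr_ge0.
rewrite (G (ep k)) (G (ep k.+1)) E1 E2.
have Hz : zeta_ M A C N b k.+1 != 0.
  by apply: (@ze_neq0 R m n M A C N b HM HA HC Hb HN l Hpos').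
rewrite [in X in _ < X]big_ltn; last by rewrite ltnS.
have H0 : 0 <= \sum_(k.+2 <= i < l.+1) zeta_ M A C N b i ^+ 2.
  by apply: sumr_ge0 => i _; apply: sqr_ge0.
rewrite ltr_sqrt; first by rewrite ltrDr lt_neqAle sqr_ge0 andbT eq_sym sqrf_eq0.
by rewrite ltr_pwDl // lt_neqAle sqr_ge0 andbT eq_sym sqrf_eq0.
Qed.
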